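(* Let $S$ be a monoid and $n\in\mathbb N$. If $A$ is an $n$-absolutely pure $S$-act and $B$ is $n$-built from $A$, then $A$ is a retract of $B$. Likewise, if $A$ is an absolutely pure $S$-act and $B$ is built from $A$, then $A$ is a retract of $B$.
   Context: A (right) $S$-act is a set with an action $(a,s)\mapsto as$ with $a1=a$, $a(st)=(as)t$. Equations over an $S$-act $C$ with variables from $X$ have the forms $xs=yt$, $xs=xt$, $xs=c$; a set of equations is consistent if it has a solution in some $S$-act containing $C$. For a set $\Sigma$ of equations over $C$, let $\kappa_\Sigma$ be the congruence on $C\sqcup F_S(X)$ ($F_S(X)$ the free $S$-act on $X$) generated by the pairs $(xu,yv)$ for $xu=yv\in\Sigma$ and $(xs,c)$ for $xs=c\in\Sigma$, and $C(\Sigma)=(C\sqcup F_S(X))/\kappa_\Sigma$; if $\Sigma$ is consistent, $C$ is identified with its image in $C(\Sigma)$ under $c\mapsto[c]$. $A$ is $n$-absolutely pure if every finite consistent set of equations over $A$ in at most $n$ variables has a solution in $A$, and absolutely pure if this holds for all $n$. $B\supseteq A$ is built (resp. $n$-built) from $A=A_0$ if $B=\bigcup_{0\le i\le\xi}A_i$ for some ordinal $\xi$, where for each $i<\xi$, $A_{i+1}=A_i(\Sigma_i)$ for some finite consistent set $\Sigma_i$ of equations over $A_i$ (resp. in at most $n$ variables), and for limit ordinals $\zeta\le\xi$, $A_\zeta=\bigcup_{i<\zeta}A_i$. $A$ is a retract of $B$ if there is an $S$-morphism $B\to A$ restricting to the identity on $A$. *)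

(* Defs.v *)
From Stdlib Require List.
From mathcomp Require Import all_boot.
Set Implicit Arguments.
Unset Strict Implicit.
Unset Printing Implicit Defensive.

Record monoid := Monoid {
  mcar :> Type;
  mmul : mcar -> mcar -> mcar;
  mone : mcar;
  mmulA : forall x y z, mmul x (mmul y z) = mmul (mmul x y) z;
  mmul1l : forall x, mmul mone x = x;
  mmul1r : forall x, mmul x mone = x }.

Record act (S : monoid) := Act {
  acar :> Type;
  actf : acar -> S -> acar;
  act1 : forall a, actf a (mone S) = a;
  actA : forall a s t, actf a (mmul s t) = actf (actf a s) t }.

Arguments actf {S} a0 a s : rename.

Definition is_morph (S : monoid) (A B : act S) (f : A -> B) : Prop :=
  forall a s, f (actf A a s) = actf B (f a) s.

Definition retract_of (S : monoid) (A B : act S) (iota : A -> B) : Prop :=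
  exists r : B -> A, is_morph r /\ forall a, r (iota a) = a.

(* Equations with variables from X and constants from C:
   EqXY x s y t  is  x s = y t   (the form x s = x t is EqXY x s x t),
   EqXC x s c    is  x s = c. *)
Inductive equation (S : monoid) (X C : Type) :=
  | EqXY of X & S & X & S
  | EqXC of X & S & C.

Definition solves (S : monoid) (X C : Type) (D : act S) (e : C -> D)
    (sol : X -> D) (Sigma : seq (equation S X C)) : Prop :=
  forall q, List.In q Sigma ->
    match q with
    | EqXY x s y t => actf D (sol x) s = actf D (sol y) t
    | EqXC x s c => actf D (sol x) s = e c
    end.

Definition consts_in (S : monoid) (X C : Type) (P : C -> Prop)
    (Sigma : seq (equation S X C)) : Prop :=
  forall q, List.In q Sigma ->
    match q with EqXY _ _ _ _ => True | EqXC _ _ c => P c end.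

Definition subact (S : monoid) (B : act S) (P : B -> Prop) : Prop :=
  forall b s, P b -> P (actf B b s).

(* Sigma (with constants in the subact P of B) is consistent over P:
   it has a solution in some S-act D containing P, i.e. there is an
   injective S-morphism e from P into D. *)
Definition consistent_over (S : monoid) (X : Type) (B : act S) (P : B -> Prop)
    (Sigma : seq (equation S X B)) : Prop :=
  exists (D : act S) (e : B -> D),
    (forall b s, P b -> e (actf B b s) = actf D (e b) s) /\
    (forall b b', P b -> P b' -> e b = e b' -> b = b') /\
    exists sol : X -> D, solves e sol Sigma.

Definition consistent (S : monoid) (X : Type) (C : act S)
    (Sigma : seq (equation S X C)) : Prop :=
  consistent_over (fun _ => True) Sigma.

(* "in at most n variables": variables from 'I_m with m <= n *)
Definition n_abs_pure (S : monoid) (A : act S) (n : nat) : Prop :=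
  forall (m : nat) (Sigma : seq (equation S 'I_m A)), m <= n ->
    consistent Sigma -> exists sol : 'I_m -> A, solves id sol Sigma.

Definition abs_pure (S : monoid) (A : act S) : Prop :=
  forall n, n_abs_pure A n.

(* Elements of C |_| F_S(X) are represented in B + X * S (inl c with c in the
   subact P, or inr (x, t) = the element x t of the free act F_S(X)). *)
Definition dact (S : monoid) (X : Type) (B : act S) (u : B + X * S) (s : S)
  : B + X * S :=
  match u with
  | inl c => inl (actf B c s)
  | inr (x, t) => inr (x, mmul t s)
  end.

Definition in_dom (S : monoid) (X : Type) (B : act S) (P : B -> Prop)
    (u : B + X * S) : Prop :=
  match u with inl c => P c | inr _ => True end.

Definition is_congruence (S : monoid) (X : Type) (B : act S)
    (R : B + X * S -> B + X * S -> Prop) : Prop :=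
  (forall u, R u u) /\ (forall u v, R u v -> R v u) /\
  (forall u v w, R u v -> R v w -> R u w) /\
  (forall u v s, R u v -> R (dact u s) (dact v s)).

Definition kappa (S : monoid) (X : Type) (B : act S)
    (Sigma : seq (equation S X B)) (u v : B + X * S) : Prop :=
  forall R, is_congruence R ->
    (forall q, List.In q Sigma ->
       match q with
       | EqXY x s y t => R (inr (x, s)) (inr (y, t))
       | EqXC x s c => R (inr (x, s)) (inl c)
       end) ->
    R u v.

(* Q (a subset of B) is C(Sigma) = (C |_| F_S(X))/kappa_Sigma, with C = P
   identified with its image: there are elements g x of B (images of the
   variables) such that the S-map phi : P |_| F_S(X) -> B,
   c |-> c, x t |-> (g x) t, maps onto Q and has kernel exactly kappa_Sigma. *)
Definition is_C_Sigma (S : monoid) (X : Type) (B : act S) (P Q : B -> Prop)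
    (Sigma : seq (equation S X B)) : Prop :=
  exists g : X -> B,
    let phi := fun u : B + X * S =>
      match u with inl c => c | inr (x, t) => actf B (g x) t end in
    (forall u, in_dom P u -> Q (phi u)) /\
    (forall b, Q b -> exists u, in_dom P u /\ phi u = b) /\
    (forall u v, in_dom P u -> in_dom P v -> (phi u = phi v <-> kappa Sigma u v)).

(* Ordinal chains are indexed by a well-ordered type I (strict order lt)
   with least element bot (= 0) and greatest element top (= xi). *)
Definition well_order (I : Type) (lt : I -> I -> Prop) : Prop :=
  (forall i, ~ lt i i) /\
  (forall i j k, lt i j -> lt j k -> lt i k) /\
  (forall i j, lt i j \/ i = j \/ lt j i) /\
  well_founded lt.

Definition is_succ (I : Type) (lt : I -> I -> Prop) (i j : I) : Prop :=
  lt i j /\ forall k, lt i k -> k = j \/ lt j k.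

Definition is_limit (I : Type) (lt : I -> I -> Prop) (bot z : I) : Prop :=
  z <> bot /\ ~ (exists i, is_succ lt i z).

(* B is built from A (through the inclusion iota) with every step using a
   finite consistent set of equations in m variables with  ok m. *)
Definition built_with (S : monoid) (ok : nat -> Prop) (A B : act S)
    (iota : A -> B) : Prop :=
  is_morph iota /\ injective iota /\
  exists (I : Type) (lt : I -> I -> Prop) (bot top : I) (Ai : I -> B -> Prop),
    well_order lt /\
    (forall i, i = bot \/ lt bot i) /\
    (forall i, i = top \/ lt i top) /\
    (forall i, subact (Ai i)) /\
    (forall b, Ai bot b <-> exists a, b = iota a) /\
    (forall i j, is_succ lt i j ->
       exists (m : nat) (Sigma : seq (equation S 'I_m B)),
         ok m /\ consts_in (Ai i) Sigma /\ consistent_over (Ai i) Sigma /\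
         is_C_Sigma (Ai i) (Ai j) Sigma) /\
    (forall z, is_limit lt bot z ->
       forall b, Ai z b <-> exists i, lt i z /\ Ai i b) /\
    (forall b : B, exists i, Ai i b).

Definition n_built (S : monoid) (n : nat) (A B : act S) (iota : A -> B) : Prop :=
  built_with (fun m => m <= n) iota.

Definition built (S : monoid) (A B : act S) (iota : A -> B) : Prop :=
  built_with (fun _ => True) iota.

(* Main.v *)
Require Import Defs.
From mathcomp Require Import all_boot.
From Stdlib Require Import ClassicalEpsilon ProofIrrelevance FunctionalExtensionality.
Set Implicit Arguments.
Unset Strict Implicit.

Lemma exist_eq (T : Type) (P : T -> Prop) (b b' : T) (H : P b) (H' : P b') :
  b = b' -> exist P b H = exist P b' H'.
Proof. move=> E; subst; f_equal; apply proof_irrelevance. Qed.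

Definition emi := excluded_middle_informative.

Definition Dcar (S : monoid) (A B : act S) (P : B -> Prop) :=
  (option A + {b : B | ~ P b})%type.

Definition Dact (S : monoid) (A B : act S) (P : B -> Prop) (r : B -> option A)
  (d : Dcar A P) (s : S) : Dcar A P :=
  match d with
  | inl o => inl (omap (fun a => actf A a s) o)
  | inr (exist b _) =>
      match emi (P (actf B b s)) with
      | left _ => inl (r (actf B b s))
      | right H => inr (exist _ (actf B b s) H)
      end
  end.

Lemma Dact1 S A B P r (d : Dcar A P) : @Dact S A B P r d (mone S) = d.
Proof.
case: d => [[a|]|[b Hb]] /=; rewrite ?act1 //.
case: emi => H; first by [].
congr inr; exact: exist_eq.
Qed.

Lemma DactA (S : monoid) (A B : act S) P r (subP : subact P)
  (mr : forall b s, P b -> r (actf B b s) = omap (fun a => actf A a s) (r b))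
  (d : Dcar A P) (s t : S) :
  @Dact S A B P r d (mmul s t) = Dact r (Dact r d s) t.
Proof.
case: d => [[a|]|[b Hb]] /=; rewrite ?actA //.
case: emi => H1; case: emi => H2 /=.
- by rewrite mr.
- by case: emi.
- by exfalso; apply: H1; apply: subP.
- case: emi => H3 //; congr inr; exact: exist_eq.
Qed.

Definition Dact_ (S : monoid) (A B : act S) (P : B -> Prop) (r : B -> option A)
  (subP : subact P)
  (mr : forall b s, P b -> r (actf B b s) = omap (fun a => actf A a s) (r b)) : act S :=
  @Act S (Dcar A P) (Dact r) (@Dact1 S A B P r) (@DactA S A B P r subP mr).

Definition phiD (S : monoid) (A B : act S) (P : B -> Prop) (r : B -> option A)
  (b : B) : Dcar A P :=
  match emi (P b) with
  | left _ => inl (r b)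
  | right H => inr (exist _ b H)
  end.

Lemma phiD_morph (S : monoid) (A B : act S) (P : B -> Prop) (r : B -> option A)
  (subP : subact P)
  (mr : forall b s, P b -> r (actf B b s) = omap (fun a => actf A a s) (r b)) b s :
  phiD P r (actf B b s) = Dact r (phiD P r b) s.
Proof.
rewrite /phiD; case: (emi (P b)) => Hb /=.
- case: emi => H; first by rewrite mr.
  by exfalso; apply: H; apply: subP.
- by [].
Qed.

Definition conv (S : monoid) (X : Type) (A B : act S) (r : B -> option A)
  (q : equation S X B) : seq (equation S X A) :=
  match q with
  | EqXY x s y t => [:: @EqXY S X A x s y t]
  | EqXC x s c => match r c with Some a => [:: @EqXC S X A x s a] | None => [::] end
  end.

Definition phiC (S : monoid) (X : Type) (B : act S) (g : X -> B) (u : B + X * S) : B :=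
  match u with inl c => c | inr (x, t) => actf B (g x) t end.

Lemma phiC_dact (S : monoid) (X : Type) (B : act S) (g : X -> B) u s :
  phiC g (dact u s) = actf B (phiC g u) s.
Proof. by case: u => [c|[x t]] //=; rewrite actA. Qed.

Lemma step (S : monoid) (A B : act S) (P Q : B -> Prop) (m : nat)
  (Sigma : seq (equation S 'I_m B)) (r : B -> option A) :
  (forall Sig : seq (equation S 'I_m A), consistent Sig ->
      exists sol : 'I_m -> A, solves id sol Sig) ->
  subact P ->
  (forall b s, P b -> r (actf B b s) = omap (fun a => actf A a s) (r b)) ->
  (forall b, P b -> r b <> None) ->
  consts_in P Sigma -> is_C_Sigma P Q Sigma ->
  (forall b, P b -> Q b) /\
  exists r' : B -> option A,
    (forall b, P b -> r' b = r b) /\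
    (forall b s, Q b -> r' (actf B b s) = omap (fun a => actf A a s) (r' b)) /\
    (forall b, Q b -> r' b <> None).
Proof.
move=> Hpure subP mr rdef Hc [g [HQ1 [HQ2 HQ3]]].
change (forall u, in_dom P u -> Q (phiC g u)) in HQ1.
change (forall b, Q b -> exists u, in_dom P u /\ phiC g u = b) in HQ2.
change (forall u v, in_dom P u -> in_dom P v -> (phiC g u = phiC g v <-> kappa Sigma u v)) in HQ3.
split; first by move=> b Pb; exact: (HQ1 (inl b)).
have gsol : forall q, List.In q Sigma ->
    match q with
    | EqXY x s y t => actf B (g x) s = actf B (g y) t
    | EqXC x s c => actf B (g x) s = c
    end.
  move=> q Hq; have Hcq := Hc q Hq.
  case: q Hq Hcq => [x s y t|x s c] Hq Hcq.
  - apply: (proj2 (HQ3 (inr (x, s)) (inr (y, t)) I I)).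
    by move=> R _ Hgen; exact: (Hgen _ Hq).
  - apply: (proj2 (HQ3 (inr (x, s)) (inl c) I Hcq)).
    by move=> R _ Hgen; exact: (Hgen _ Hq).
pose Sig' := List.flat_map (conv r) Sigma.
have Hcons : consistent Sig'.
  exists (Dact_ subP mr), (fun a => inl (Some a)); split; first by [].
  split; first by move=> b b' _ _ [].
  exists (fun x => phiD P r (g x)) => q' /List.in_flat_map [q [Hq Hq']].
  have := gsol q Hq.
  case: q Hq Hq' => [x s y t|x s c] Hq /=.
  - case=> // <- E; rewrite /= -!(phiD_morph subP mr); by rewrite E.
  - have Pc : P c := Hc _ Hq.
    case E: (r c) => [a|] //; case=> // <- E2 /=.
    rewrite -(phiD_morph subP mr) E2 /phiD; case: emi => // _; by rewrite E.
have [sol Hsol] := Hpure Sig' Hcons.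
pose psi := fun u : B + 'I_m * S =>
  match u with inl c => r c | inr (x, t) => Some (actf A (sol x) t) end.
have psi_dact : forall u s, in_dom P u -> psi (dact u s) = omap (fun a => actf A a s) (psi u).
  by move=> [c|[x t]] s /= Hu; rewrite ?mr // actA.
have psi_eq : forall u v, in_dom P u -> in_dom P v -> phiC g u = phiC g v -> psi u = psi v.
  move=> u v Hu Hv /(HQ3 u v Hu Hv) Hk.
  pose R := fun u v => (in_dom P u /\ in_dom P v /\ psi u = psi v) \/ u = v.
  have : R u v.
    apply: Hk.
    - split; first by move=> w; right.
      split; first by move=> w1 w2 [[h1 [h2 e]]|->]; [left|right].
      split.
        move=> w1 w2 w3 [[h1 [h2 e1]]|->] [[h3 [h4 e2]]|<-].
        - by left; split=> //; split=> //; rewrite e1.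
        - by left.
        - by left.
        - by right.
      move=> w1 w2 s [[h1 [h2 e]]|->]; last by right.
      left; split; first by case: w1 h1 {e} => [c|[x t]] /= hc; first exact: subP.
      split; first by case: w2 h2 {e} => [c|[x t]] /= hc; first exact: subP.
      by rewrite !psi_dact // e.
    - move=> q Hq; have Hcq := Hc q Hq.
      case: q Hq Hcq => [x s y t|x s c] Hq Hcq.
      + left; split=> //; split=> //=; congr Some.
        apply: (Hsol (EqXY A x s y t)); apply/List.in_flat_map; exists (EqXY B x s y t).
        by split=> //=; left.
      + left; split=> //; split=> //=.
        case E: (r c) => [a|]; last by exfalso; exact: (rdef c Hcq).
        congr Some.
        apply: (Hsol (EqXC x s a)); apply/List.in_flat_map; exists (EqXC x s c).
        by split=> //=; rewrite E; left.
  by case=> [[_ [_ ->]]|->].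
pose r' := fun b => match emi (Q b) with
  | left H => psi (proj1_sig (constructive_indefinite_description _ (HQ2 b H)))
  | right _ => None end.
have key : forall b u, in_dom P u -> phiC g u = b -> r' b = psi u.
  move=> b u Hu Eu; rewrite /r'; case: emi => HQb.
  - case: constructive_indefinite_description => u' [Hu' Eu'] /=.
    by apply: psi_eq => //; rewrite Eu Eu'.
  - by exfalso; apply: HQb; rewrite -Eu; exact: HQ1.
exists r'; split; first by move=> b Pb; exact: (key b (inl b)).
split.
- move=> b s /HQ2 [u [Hu Eu]].
  have Hd : in_dom P (dact u s) by case: u Hu {Eu} => [c|[x t]] /= hc; first exact: subP.
  rewrite (key _ (dact u s)) ?phiC_dact ?Eu // (key b u) //.
  exact: psi_dact.
- move=> b /HQ2 [u [Hu Eu]]; rewrite (key b u) //.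
  by case: u Hu {Eu} => [c|[x t]] //= Hc'; apply: rdef.
Qed.

Definition cid := constructive_indefinite_description.

Definition Spec (S : monoid) (A B : act S) (P Q : B -> Prop) (r r' : B -> option A) :=
  (forall b, P b -> r' b = r b) /\
  (forall b s, Q b -> r' (actf B b s) = omap (fun a => actf A a s) (r' b)) /\
  (forall b, Q b -> r' b <> None).

Definition ext (S : monoid) (A B : act S) (P Q : B -> Prop) (r : B -> option A) :=
  epsilon (inhabits (fun _ : B => @None A)) (Spec P Q r).

Definition r0 (S : monoid) (A B : act S) (iota : A -> B) (b : B) : option A :=
  epsilon (inhabits (@None A)) (fun o => exists a, o = Some a /\ iota a = b).

Definition FF (S : monoid) (A B : act S) (iota : A -> B) (I : Type)
  (lt : I -> I -> Prop) (bot : I) (Ai : I -> B -> Prop)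
  (i : I) (rec : forall j, lt j i -> B -> option A) : B -> option A :=
  if emi (i = bot) then r0 iota else
  match emi (exists j, is_succ lt j i) with
  | left H => let (j, Hj) := cid H in ext (Ai j) (Ai i) (rec j (proj1 Hj))
  | right _ => fun b =>
      match emi (exists j, lt j i /\ Ai j b) with
      | left H => let (j, Hj) := cid H in rec j (proj1 Hj) b
      | right _ => None
      end
  end.

Arguments FF {S A B} iota {I} lt bot Ai i rec.

Lemma main_gen (S : monoid) (ok : nat -> Prop) (A B : act S) (iota : A -> B) :
  (forall m (Sig : seq (equation S 'I_m A)), ok m -> consistent Sig ->
      exists sol : 'I_m -> A, solves id sol Sig) ->
  built_with ok iota -> retract_of iota.
Proof.
move=> Hpure [miota [iinj [I [lt [bot [top [Ai [[lirr [ltr [ltot wf]]]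
   [Hbot [Htop [Hsub [H0 [Hsucc [Hlim Hcov]]]]]]]]]]]]]].
pose rr := Fix wf (fun _ => B -> option A) (FF iota lt bot Ai).
have rrE : forall i, rr i = FF iota lt bot Ai i (fun j _ => rr j).
  move=> i; rewrite /rr; apply: Fix_eq => k f g Hfg.
  have -> : f = g by apply: functional_extensionality_dep => j;
    apply: functional_extensionality_dep => h; apply: Hfg.
  by [].
pose Inv := fun i =>
  (forall b, Ai i b -> rr i b <> None) /\
  (forall b s, Ai i b -> rr i (actf B b s) = omap (fun a => actf A a s) (rr i b)) /\
  (forall j, lt j i -> forall b, Ai j b -> Ai i b /\ rr i b = rr j b).
have r0E : forall a, r0 iota (iota a) = Some a.
  move=> a; rewrite /r0.
  have [a' [-> Ea]] := epsilon_spec (inhabits (@None A))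
    (fun o => exists a', o = Some a' /\ iota a' = iota a) (ex_intro _ (Some a) (ex_intro _ a (conj erefl erefl))).
  by rewrite (iinj _ _ Ea).
have coh : forall j1 j2 b, Inv j1 -> Inv j2 -> Ai j1 b -> Ai j2 b -> rr j1 b = rr j2 b.
  move=> j1 j2 b [_ [_ I1]] [_ [_ I2]] h1 h2.
  case: (ltot j1 j2) => [l|[<-|l]] //.
  - by rewrite (proj2 (I2 _ l _ h1)).
  - by rewrite (proj2 (I1 _ l _ h2)).
have AllInv : forall i, Inv i.
  apply: (well_founded_induction wf) => i IH.
  case: (emi (i = bot)) => [Eb|Nb].
  -
    subst i.
    have rrb : rr bot = r0 iota by rewrite rrE /FF; case: emi.
    split; last split.
    + by move=> b /H0 [a ->]; rewrite rrb r0E.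
    + by move=> b s /H0 [a ->]; rewrite -miota rrb !r0E.
    + move=> j l; exfalso; case: (Hbot j) => [Ej|l'].
      * by apply: (lirr j); rewrite {2}Ej.
      * by apply: (lirr j); apply: (ltr _ _ _ l).
  case: (emi (exists j, is_succ lt j i)) => [Hex|Hns].
  -
    have [j [Hj rri]] : exists j, is_succ lt j i /\ rr i = ext (Ai j) (Ai i) (rr j).
      move: (rrE i); rewrite /FF; destruct (emi (i = bot)) as [E0|N0]; first by []. destruct (emi (exists j, is_succ lt j i)) as [H|H]; last by [].
      destruct (cid H) as [j Hj]; move=> E; by exists j.
    have lji := proj1 Hj.
    have [Ij1 [Ij2 Ij3]] := IH j lji.
    have [m [Sig [okm [Hcs [_ HC]]]]] := Hsucc j i Hj.
    have [PQ Hex'] := step (Hpure m ^~ okm) (Hsub j) Ij2 Ij1 Hcs HC.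
    have [Sp1 [Sp2 Sp3]] : Spec (Ai j) (Ai i) (rr j) (rr i).
      by rewrite rri /ext; apply: epsilon_spec.
    split; first exact: Sp3. split; first exact: Sp2.
    move=> k lk b hk.
    have [Ekj|lkj] : k = j \/ lt k j.
      case: (ltot k j) => [?|[?|ljk]]; [by right|by left|].
      exfalso; case: (proj2 Hj k ljk) => [Eki|lik].
      - by subst k; apply: (lirr i).
      - by apply: (lirr i); apply: (ltr _ _ _ lik).
    + by subst k; split; [apply: PQ|apply: Sp1].
    + have [hj ej] := Ij3 k lkj b hk.
      by split; [apply: PQ|rewrite Sp1 // ej].
  -
    have Hl : is_limit lt bot i by split.
    have rrL : forall b j, lt j i -> Ai j b -> rr i b = rr j b.
      move=> b j lj hj; rewrite rrE /FF.
      destruct (emi (i = bot)) as [E0|N0]; first by [].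
      destruct (emi (exists j, is_succ lt j i)) as [H'|H']; first by [].
      simpl; destruct (emi (exists j, lt j i /\ Ai j b)) as [H|H].
      + by destruct (cid H) as [j' [l' h']]; exact: (coh j' j b (IH j' l') (IH j lj) h' hj).
      + by exfalso; apply: H; exists j.
    split; last split.
    + by move=> b /(Hlim i Hl) [j [lj hj]]; rewrite (rrL b j) //; apply: (proj1 (IH j lj)).
    + move=> b s /(Hlim i Hl) [j [lj hj]].
      have hjs : Ai j (actf B b s) by apply: Hsub.
      rewrite (rrL _ j) // (rrL b j) //; exact: (proj1 (proj2 (IH j lj))).
    + move=> k lk b hk; split; first by apply/(Hlim i Hl); exists k.
      exact: rrL.
have topdef : forall b, exists a, rr top b = Some a.
  move=> b; have [i hi] := Hcov b.
  have hb : Ai top b.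
    case: (Htop i) => [<-//|l]; exact: (proj1 ((proj2 (proj2 (AllInv top))) i l b hi)).
  case E: (rr top b) => [a|]; first by exists a.
  by exfalso; apply: (proj1 (AllInv top) b hb).
exists (fun b => proj1_sig (cid (topdef b))); split.
- move=> b s; case: cid => a Ea; case: cid => a' Ea' /=.
  have hb : Ai top b.
    have [i hi] := Hcov b.
    case: (Htop i) => [<-//|l]; exact: (proj1 ((proj2 (proj2 (AllInv top))) i l b hi)).
  move: Ea; rewrite (proj1 (proj2 (AllInv top))) // Ea' /=; by case.
- move=> a; case: cid => a' /=.
  have hb : Ai bot (iota a) by apply/H0; exists a.
  have -> : rr top (iota a) = rr bot (iota a).
    case: (Hbot top) => [->//|l]; exact: (proj2 ((proj2 (proj2 (AllInv top))) bot l _ hb)).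
  have : rr bot (iota a) = Some a.
    by rewrite rrE /FF; case: emi => // _; apply: r0E.
  by move=> -> [].
Qed.


Theorem mainTheorem14 (S : monoid) (n : nat) (A B : act S) (iota : A -> B) :
  (n_abs_pure A n -> n_built n iota -> retract_of iota) /\
  (abs_pure A -> built iota -> retract_of iota).
Proof.
split.
- move=> Hp Hb; apply: (main_gen _ Hb) => m Sig okm Hc; exact: (Hp m Sig okm Hc).
- move=> Hp Hb; apply: (main_gen _ Hb) => m Sig _ Hc; exact: (Hp m m Sig (leqnn m) Hc).
Qed.
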